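(* Let $u:\mathbb{R}^d\to\mathbb{R}$ be $\mathbb{Z}^d$-periodic and such that $D^2u\succeq-\lambda I_d$ in the weak sense, for some $\lambda\ge0$. Then for every $x\in\mathbb{R}^d$ and every $p\in\partial u(x)$, one has $|p|_\infty\le\frac12\lambda$, where $|p|_\infty=\max_i|p_i|$.
   Context: $\partial u(x)$ denotes the subdifferential of the semi-convex function $u$ at $x$ (the set of $p$ with $u(y)\ge u(x)+p\cdot(y-x)-\frac\lambda2|y-x|^2$ for all $y$). *)

(* Defs.v *)
From HB Require Import structures.
From mathcomp Require Import all_boot all_order all_algebra.
From mathcomp Require Import reals.
Set Implicit Arguments. Unset Strict Implicit. Unset Printing Implicit Defensive.
Import Order.TTheory GRing.Theory Num.Theory.
Local Open Scope ring_scope.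

Definition dotv (R : realType) (d : nat) (p x : 'rV[R]_d) : R :=
  \sum_(i < d) p 0 i * x 0 i.
Definition sqnorm (R : realType) (d : nat) (x : 'rV[R]_d) : R := dotv x x.

Definition supnorm (R : realType) (d : nat) (p : 'rV[R]_d) : R :=
  \big[Num.max/0]_(i < d) `|p 0 i|.

Definition Zd_periodic (R : realType) (d : nat) (u : 'rV[R]_d -> R) : Prop :=
  forall (x : 'rV[R]_d) (k : 'I_d -> int), u (x + \row_i (k i)%:~R) = u x.

Definition convex_fun (R : realType) (d : nat) (f : 'rV[R]_d -> R) : Prop :=
  forall (x y : 'rV[R]_d) (t : R), 0 <= t -> t <= 1 ->
    f ((1 - t) *: x + t *: y) <= (1 - t) * f x + t * f y.

(* D^2 u >= - lambda I_d (weak sense): u + lambda/2 |x|^2 is convex *)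
Definition hessian_ge (R : realType) (d : nat) (u : 'rV[R]_d -> R) (lam : R) : Prop :=
  convex_fun (fun x => u x + lam / 2 * sqnorm x).

(* subdifferential of a lambda-semiconvex function u at x *)
Definition subdiff (R : realType) (d : nat) (u : 'rV[R]_d -> R) (lam : R)
  (x p : 'rV[R]_d) : Prop :=
  forall y : 'rV[R]_d, u y >= u x + dotv p (y - x) - lam / 2 * sqnorm (y - x).

(* Main.v *)
Require Import Defs.
From HB Require Import structures.
From mathcomp Require Import all_boot all_order all_algebra.
From mathcomp Require Import reals.
From mathcomp Require Import lra.
Import Order.TTheory GRing.Theory Num.Theory.
Local Open Scope ring_scope.

Lemma dot_delta (R : realType) (d : nat) (p : 'rV[R]_d) (i : 'I_d) (s : int) :
  dotv p (\row_j ((if j == i then s else 0%R) : int)%:~R) = p 0 i * s%:~R.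
Proof.
rewrite /dotv (bigD1 i) //= big1 ?addr0; first by rewrite mxE eqxx.
by move=> j /negbTE ji; rewrite mxE ji mulr0.
Qed.

Lemma sqn_delta (R : realType) (d : nat) (i : 'I_d) (s : int) :
  sqnorm (\row_j ((if j == i then s else 0%R) : int)%:~R : 'rV[R]_d) = s%:~R * s%:~R.
Proof. by rewrite /sqnorm dot_delta mxE eqxx. Qed.

Theorem mainTheorem3 (R : realType) (d : nat) (u : 'rV[R]_d -> R) (lam : R) :
  0 <= lam -> Zd_periodic u -> hessian_ge u lam ->
  forall (x p : 'rV[R]_d), subdiff u lam x p -> supnorm p <= lam / 2.
Proof.
move=> lam0 per _ x p sd.
have key : forall i s, (s = 1 \/ s = -1) -> p 0 i * s%:~R <= lam / 2.
  move=> i s hs.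
  have := sd (x + \row_j ((if j == i then s else 0%R) : int)%:~R).
  set r := \row_j _.
  have -> : x + r - x = r by rewrite addrC addKr.
  rewrite per /r dot_delta sqn_delta.
  case: hs => ->; rewrite ?mulr1 ?mulrN1 ?mulN1r ?opprK ?mulr1 => H; lra.
rewrite /supnorm; apply: (big_ind (fun y => y <= lam / 2)).
- lra.
- by move=> a b ha hb; rewrite ge_max ha hb.
move=> i _; have h1 := key i 1 (or_introl erefl).
have h2 := key i (-1) (or_intror erefl).
rewrite mulr1 in h1; rewrite mulrN1 in h2.
rewrite ler_norml; apply/andP; split; lra.
Qed.
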